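(* Let $G$ be a finite simple connected graph with at least $4$ vertices and $\delta_2(G)\geqslant 4$. Then either $G$ contains a chorded cycle, or every leaf block of $G$ is a triangle.
   Context: $\delta_2(G)$ is the minimum of $|N_G(u)\cup N_G(v)|$ over all pairs of distinct nonadjacent vertices $u,v$ of $G$. A chorded cycle is a cycle together with an edge of the graph, not on the cycle, joining two vertices of the cycle. A block is a maximal subgraph without cut-vertices; a leaf block of a connected graph is a block containing exactly one cut-vertex of the graph. *)

(* Defs.v *)
(* A finite simple graph is a symmetric irreflexive
   relation e on a finType T (vertices = T). *)
From mathcomp Require Import all_boot.
Set Implicit Arguments. Unset Strict Implicit. Unset Printing Implicit Defensive.

Section Graph.
Variables (T : finType) (e : rel T).

Definition nbhd (u : T) : {set T} := [set v | e u v].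

(* delta_2(G) >= k : every pair of distinct nonadjacent vertices u, v
   satisfies |N(u) \cup N(v)| >= k (vacuous if no such pair, i.e. the
   minimum over the empty set is +infinity). *)
Definition delta2_ge (k : nat) : Prop :=
  forall u v : T, u != v -> ~~ e u v -> k <= #|nbhd u :|: nbhd v|.

Definition restr (S : {set T}) : rel T :=
  [rel x y | [&& x \in S, y \in S & e x y]].

Definition connected_on (S : {set T}) : Prop :=
  forall x y, x \in S -> y \in S -> connect (restr S) x y.

Definition connected_graph : Prop := connected_on [set: T].

Definition cut_vertex (v : T) : Prop := ~ connected_on [set~ v].

Definition nonseparable (B : {set T}) : Prop :=
  B != set0 /\ connected_on B /\ forall v, v \in B -> connected_on (B :\ v).

(* a block: maximal subgraph without cut-vertices (blocks are induced,
   so they are determined by their vertex sets) *)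
Definition block (B : {set T}) : Prop :=
  nonseparable B /\ forall B' : {set T}, B \subset B' -> nonseparable B' -> B' = B.

Definition leaf_block (B : {set T}) : Prop :=
  block B /\ exists c, [/\ c \in B, cut_vertex c &
                           forall v, v \in B -> cut_vertex v -> v = c].

Definition triangle (B : {set T}) : Prop :=
  #|B| = 3 /\ forall x y, x \in B -> y \in B -> x != y -> e x y.

(* a chorded cycle: a cycle c = [x_0; ...; x_{m-1}] (m >= 3, distinct
   vertices, consecutive and last-first adjacent) together with an edge
   joining two vertices of c that is not an edge of the cycle *)
Definition has_chorded_cycle : Prop :=
  exists c : seq T,
    [/\ uniq c, 3 <= size c, cycle e c &
      exists x y, [/\ x \in c, y \in c, e x y, y != next c x & x != next c y]].

End Graph.

(* Main.v *)
Require Import Defs.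
From mathcomp Require Import all_boot.
From Stdlib Require Import Classical.
From mathcomp Require Import zify.
Set Implicit Arguments. Unset Strict Implicit. Unset Printing Implicit Defensive.

Section G.
Variables (T : finType) (e : rel T).
Hypotheses (esy : symmetric e) (eirr : irreflexive e).

Lemma chord_core x a s y :
  uniq (x :: a :: s) -> path e a s -> e x a -> e (last a s) x ->
  y \in s -> y != last a s -> e x y -> has_chorded_cycle e.
Proof.
move=> U P xa lx ys yl xy.
have /and3P[xnas ans us] : [&& x \notin a :: s, a \notin s & uniq s] by move: U => /= /andP[-> /andP[-> ->]].
have ya : a != y by apply: contraNneq ans => ?; subst.
have yx : x != y by apply: contraNneq xnas => ?; subst; rewrite inE ys orbT.
exists (x :: a :: s); split => //.
- by rewrite /= ltnS; case: s ys {U P lx yl xnas ans us ya} => //= ? [].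
- by rewrite /cycle /= rcons_path xa P lx.
exists x, y; split => //.
- by rewrite inE eqxx.
- by rewrite !inE ys !orbT.
- by rewrite next_nth inE eqxx /= eqxx eq_sym.
- rewrite next_nth !inE ys !orbT /= (negbTE yx) (negbTE ya) /=.
  have hi : (index y s).+1 < size s.
    have := index_mem y s; rewrite ys => hlt.
    rewrite ltn_neqAle hlt andbT; apply: contra yl => /eqP hs.
    have hs' : index y s = (size s).-1 by rewrite -hs.
    by rewrite -(nth_last a) -hs' nth_index.
  apply: contraNneq xnas => ->; by rewrite inE (mem_nth _ hi) ?orbT.
Qed.

Lemma sorted_catE s1 x s2 :
  sorted e (s1 ++ x :: s2) = sorted e (rcons s1 x) && path e x s2.
Proof. by case: s1 => [|y s1] //=; rewrite cat_path rcons_path /= andbA. Qed.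

Lemma chord2 p1 a s2 u y :
  sorted e (p1 ++ a :: s2 ++ [:: u]) -> uniq (p1 ++ a :: s2 ++ [:: u]) ->
  e u a -> y \in s2 -> y != last a s2 -> e u y -> has_chorded_cycle e.
Proof.
rewrite sorted_catE cat_uniq => /andP[_ P] /and3P[_ _ U] ua ys yl uy.
move: P; rewrite cat_path /= andbT => /andP[P lu].
apply: (chord_core (a:=a) (s:=s2)) ys yl uy => //.
by move: U; rewrite -cat_cons cats1 rcons_uniq.
Qed.

Lemma three_nbrs r w u y1 y2 :
  sorted e (r ++ [:: w; u]) -> uniq (r ++ [:: w; u]) ->
  y1 \in r -> y2 \in r -> y1 != y2 -> e u y1 -> e u y2 -> has_chorded_cycle e.
Proof.
move=> S U.
have wr : w \notin r by move: U; rewrite cat_uniq /= => /and3P[_ /norP[] ].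
have key : forall a b, a \in r -> b \in r -> e u a -> e u b ->
   (exists r1 r2 r3, r = r1 ++ a :: r2 ++ b :: r3) -> has_chorded_cycle e.
  move=> a b ar br ua ub [r1 [r2 [r3 def]]].
  apply: (chord2 (p1 := r1) (a := a) (s2 := r2 ++ b :: r3 ++ [:: w]) (u := u) (y := b)) => //.
  - by move: S; rewrite def -!catA /= -!catA.
  - by move: U; rewrite def -!catA /= -!catA.
  - by rewrite mem_cat inE eqxx orbT.
  - rewrite last_cat /= last_cat /=; apply: contraNneq wr => <-; exact: br.
move=> y1r y2r y12 uy1 uy2.
case/splitPr: y1r y2r S U y12 key => r1 r2 y2r S U y12 key.
rewrite mem_cat inE eq_sym (negbTE y12) /= in y2r.
case/orP: y2r => y2r.
- case/splitPr: y2r S U key => r11 r12 S U key.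
  apply: (key y2 y1) => //; try by rewrite !(mem_cat, inE, eqxx, orbT).
  by exists r11, r12, r2; rewrite -catA.
- case/splitPr: y2r S U key => r21 r22 S U key.
  apply: (key y1 y2) => //; try by rewrite !(mem_cat, inE, eqxx, orbT).
  by exists r1, r21, r22.
Qed.

Lemma no3 t u y1 y2 y3 :
  sorted e (rcons t u) -> uniq (rcons t u) ->
  y1 \in t -> y2 \in t -> y3 \in t -> y1 != y2 -> y1 != y3 -> y2 != y3 ->
  e u y1 -> e u y2 -> e u y3 -> has_chorded_cycle e.
Proof.
case/lastP: t => [//|r w] S U.
have E : rcons (rcons r w) u = r ++ [:: w; u] by rewrite -!cats1 -catA.
rewrite E in S U.
rewrite !mem_rcons !inE => h1 h2 h3 d12 d13 d23 u1 u2 u3.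
case: (eqVneq y1 w) => [e1|n1].
  subst y1; move: h2 h3; rewrite ![_ == w]eq_sym (negbTE d12) (negbTE d13) /= => h2 h3.
  exact: (three_nbrs S U h2 h3 d23 u2 u3).
rewrite (negbTE n1) /= in h1.
case: (eqVneq y2 w) => [e2|n2].
  subst y2; move: h3; rewrite [_ == w]eq_sym (negbTE d23) /= => h3.
  exact: (three_nbrs S U h1 h3 d13 u1 u3).
rewrite (negbTE n2) /= in h2.
exact: (three_nbrs S U h1 h2 d12 u1 u2).
Qed.

Definition okp (S : {set T}) x0 (s : seq T) :=
  [/\ sorted e s, uniq s, {subset s <= S} & head x0 s = x0].
Definition maxp S x0 s := okp S x0 s /\ forall t, okp S x0 t -> size t <= size s.

Lemma uniq_size_le (s : seq T) : uniq s -> size s <= #|T|.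
Proof. by move/card_uniqP <-; exact: max_card. Qed.

Lemma maxp_exists (S : {set T}) (x0 : T) : x0 \in S -> exists s, maxp S x0 s.
Proof.
move=> x0S.
have H : forall n (s : seq T), okp S x0 s -> #|T| - size s <= n -> exists s', maxp S x0 s'.
  elim=> [|n IH] s oks hn.
  - exists s; split => // t okt.
    case: oks okt => _ us _ _ [_ ut _ _].
    have := uniq_size_le ut; lia.
  - case: (classic (exists t, okp S x0 t /\ size s < size t)) => [[t [okt lt]]|nt].
    + apply: (IH t okt).
      case: okt => _ ut _ _; have := uniq_size_le ut; lia.
    + exists s; split => // t okt; rewrite leqNgt; apply/negP => lt.
      by apply: nt; exists t.
apply: (H #|T| [:: x0]) => //; last by rewrite leq_subr.
by split => // z; rewrite inE => /eqP ->.
Qed.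

Lemma maxp_ext S x0 s y : maxp S x0 s -> s != [::] -> y \in S ->
  e (last x0 s) y -> y \in s.
Proof.
case=> [[So U Sub H] M] sn yS ly; apply/negPn/negP => ys.
have : okp S x0 (rcons s y).
  case: s sn So U Sub H ly ys {M} => [//|z s'] _ /= So U Sub H ly ys.
  split => //.
  - by rewrite /= rcons_path So ly.
  - by rewrite -rcons_cons rcons_uniq ys /=; exact: U.
  - by move=> w; rewrite -rcons_cons mem_rcons inE => /orP[/eqP ->|/Sub].
move/M; by rewrite size_rcons ltnn.
Qed.

Lemma maxp_nil S x0 s : maxp S x0 s -> x0 \in S -> exists s', s = x0 :: s'.
Proof.
case=> [[_ _ _ H] M] x0S.
have : okp S x0 [:: x0] by split => // z; rewrite inE => /eqP ->.
move/M; case: s H {M} => [//|z s'] /= -> _; by exists s'.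
Qed.

Lemma rot_ok S x0 r1 a X :
  okp S x0 (r1 ++ a :: X) -> e a (last a X) -> okp S x0 (r1 ++ a :: rev X).
Proof.
case=> So U Sub H ax.
have pe : perm_eq (r1 ++ a :: X) (r1 ++ a :: rev X).
  by rewrite perm_cat2l perm_cons perm_sym perm_rev.
split.
- move: So; rewrite !sorted_catE => /andP[-> P] /=.
  case/lastP: X P ax {pe U Sub H} => [//|X' z] P.
  rewrite last_rcons rev_rcons /= => -> /=.
  have := rev_path e a (rcons X' z).
  rewrite last_rcons belast_rcons rev_cons rcons_path.
  have -> : path (fun z0 : T => e^~ z0) a (rcons X' z) = path e a (rcons X' z).
    by apply: eq_path => p q; rewrite /= esy.
  by rewrite P => /andP[].
- by rewrite -(perm_uniq pe).
- by move=> z; rewrite -(perm_mem pe); exact: Sub.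
- by case: r1 H {So U Sub pe}.
Qed.

Lemma rot_size (r1 : seq T) a X : size (r1 ++ a :: rev X) = size (r1 ++ a :: X).
Proof. by rewrite !size_cat /= size_rev. Qed.

Lemma card3 (A : {set T}) : 2 < #|A| ->
  exists y1 y2 y3, [/\ y1 \in A, y2 \in A, y3 \in A & [/\ y1 != y2, y1 != y3 & y2 != y3]].
Proof.
move=> h.
have /card_gt0P[y1 y1A] : 0 < #|A| by apply: leq_trans h.
have : 1 < #|A :\ y1| by move: h; rewrite (cardsD1 y1 A) y1A.
case/card_gt1P => y2 [y3 [h2 h3 d]].
move: h2 h3; rewrite !in_setD1 => /andP[n2 a2] /andP[n3 a3].
by exists y1, y2, y3; split => //; split => //; rewrite eq_sym.
Qed.

Lemma mindeg3 (S : {set T}) x0 : x0 \in S ->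
  (forall y, y \in S -> 2 < #|nbhd e y :&: S|) -> has_chorded_cycle e.
Proof.
move=> x0S deg.
have [s Ms] := maxp_exists x0S.
have [s' def] := maxp_nil Ms x0S.
have Ms' := Ms; case: Ms' => [[So U Sub H] _].
set u := last x0 s.
have uS : u \in S by apply: Sub; rewrite /u def /= mem_last.
have [y1 [y2 [y3 [h1 h2 h3 [d12 d13 d23]]]]] := card3 (deg u uS).
have sn : s != [::] by rewrite def.
have inS : forall y, y \in nbhd e u :&: S -> y \in belast x0 s'.
  move=> y; rewrite in_setI in_set => /andP[uy yS].
  have ys := maxp_ext Ms sn yS uy.
  move: ys; rewrite def lastI mem_rcons inE => /orP[/eqP yu|//].
  by move: uy; rewrite /u def /= -yu eirr.
have E : s = rcons (belast x0 s') u by rewrite /u def /= -lastI.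
have nb : forall y, y \in nbhd e u :&: S -> e u y by move=> y; rewrite in_setI in_set => /andP[].
rewrite E in So U.
exact: (no3 So U (inS _ h1) (inS _ h2) (inS _ h3) d12 d13 d23 (nb _ h1) (nb _ h2) (nb _ h3)).
Qed.

Lemma deg1 u w : u != w -> (forall y, e u y -> y = w) -> 4 <= #|T| ->
  delta2_ge e 4 -> has_chorded_cycle e.
Proof.
move=> uw Nu T4 D2.
set S := ~: [set u; w].
have : 0 < #|S|.
  have := cardsC [set u; w]; rewrite cards2 uw -/S; lia.
case/card_gt0P => x0 x0S.
apply: (mindeg3 x0S) => y; rewrite /S in_setC !inE negb_or => /andP[yu yw].
have nuy : ~~ e u y by apply/negP => /Nu /eqP; rewrite (negbTE yw).
have := D2 u y; rewrite eq_sym yu => /(_ isT nuy) h.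
have sub : nbhd e u :|: nbhd e y \subset w |: (nbhd e y :&: S).
  apply/subsetP => z; rewrite !inE => /orP[/Nu ->|yz]; first by rewrite eqxx.
  case: (eqVneq z w) => //= zw; rewrite yz /= orbF.
  apply/eqP => zu; subst z.
  by move: yz; rewrite esy => /Nu /eqP; rewrite (negbTE yw).
have := subset_leq_card sub; rewrite cardsU1.
move: h; rewrite -/S; case: (w \notin _) => /=; lia.
Qed.

Lemma restr_sym (X : {set T}) : symmetric (restr e X).
Proof. by move=> p q; rewrite /restr /= esy andbCA. Qed.

Lemma csym (X : {set T}) p q : connect (restr e X) p q = connect (restr e X) q p.
Proof. exact: (sym_connect_sym (restr_sym X)). Qed.

Lemma path_connect (X : {set T}) a p : path e a p -> a \in X -> {subset p <= X} ->
  connect (restr e X) a (last a p).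
Proof.
elim: p a => [|y p IH] a /=; first by rewrite connect0.
case/andP=> ay P aX sub.
have yX : y \in X by apply: sub; rewrite inE eqxx.
apply: connect_trans (connect1 _) (IH _ P yX _); first by rewrite /restr /= aX yX ay.
by move=> z zp; apply: sub; rewrite inE zp orbT.
Qed.

Lemma connect_mono (X Y : {set T}) a b : X \subset Y ->
  connect (restr e X) a b -> connect (restr e Y) a b.
Proof.
move=> /subsetP XY; apply: connect_sub => p q /and3P[pX qX pq].
by apply: connect1; rewrite /restr /= pq !XY.
Qed.

Lemma hub_conn (X : {set T}) h : (forall z, z \in X -> connect (restr e X) z h) ->
  connected_on e X.
Proof.
move=> H p q pX qX; apply: connect_trans (H p pX) _.
by rewrite csym; exact: H.
Qed.

Lemma closure_conn (X : {set T}) (Y : pred T) a b : connect (restr e X) a b -> a \in Y ->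
  (forall p q, p \in Y -> restr e X p q -> q \in Y) -> b \in Y.
Proof.
case/connectP => p P -> {b}; elim: p a P => [|y p IH] a //= /andP[ay P] aY H.
exact: IH P (H _ _ aY ay) H.
Qed.

Lemma first_step (X : {set T}) a b : connect (restr e X) a b -> a != b ->
  exists y, [/\ a \in X, y \in X & e a y].
Proof.
case/connectP => [[|y p]] /=; first by move=> _ ->; rewrite eqxx.
by case/andP => /and3P[aX yX ay] _ _ _; exists y.
Qed.

Lemma ear_pre (X : {set T}) x b E1 z E2 : path e x ((E1 ++ z :: E2) ++ [:: b]) ->
  x \in X -> {subset E1 <= X} -> z \in X -> connect (restr e X) x z.
Proof.
rewrite -catA cat_path /= => /and3P[P1 lz _] xX s1 zX.
have := path_connect (p := rcons E1 z) (X := X) _ xX.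
rewrite last_rcons; apply; first by rewrite rcons_path P1 lz.
by move=> w; rewrite mem_rcons inE => /orP[/eqP->|/s1].
Qed.

Lemma ear_suf (X : {set T}) x b E1 z E2 : path e x ((E1 ++ z :: E2) ++ [:: b]) ->
  z \in X -> {subset E2 <= X} -> b \in X -> connect (restr e X) z b.
Proof.
rewrite -catA cat_path /= => /and3P[_ _ P2] zX s2 bX.
have := path_connect (p := E2 ++ [:: b]) (X := X) P2 zX.
rewrite last_cat /=; apply.
by move=> w; rewrite mem_cat inE => /orP[/s2|/eqP->].
Qed.

Lemma ear_nonsep (B : {set T}) x b E : nonseparable e B -> x \in B -> b \in B ->
  x != b -> path e x (E ++ [:: b]) -> uniq (x :: E ++ [:: b]) ->
  (forall z, z \in E -> z \notin B) ->
  nonseparable e (B :|: [set z | z \in E]).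
Proof.
case=> _ [BC BV] xB bB xb P U EB.
set B' := B :|: _.
have inB' : forall z, (z \in B') = (z \in B) || (z \in E) by move=> z; rewrite !inE.
have BB' : B \subset B' by apply/subsetP => z zB; rewrite inB' zB.
have EB' : {subset E <= B'} by move=> z zE; rewrite inB' zE orbT.
have splitE : forall z, z \in E -> exists E1 E2, E = E1 ++ z :: E2.
  by move=> z /splitPr [E1 E2]; exists E1, E2.
have Pz : forall E1 z E2, E = E1 ++ z :: E2 -> path e x ((E1 ++ z :: E2) ++ [:: b]).
  by move=> E1 z E2 <-.
split; [|split].
- by apply/set0Pn; exists x; rewrite inB' xB.
- apply: (hub_conn (h := x)) => z; rewrite inB' => /orP[zB|zE].
    exact: connect_mono BB' (BC _ _ zB xB).
  have [E1 [E2 dE]] := splitE z zE.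
  rewrite csym; apply: (ear_pre (Pz _ _ _ dE)); first by rewrite inB' xB.
    by move=> w wE; apply: EB'; rewrite dE mem_cat wE.
  exact: EB'.
- move=> v; rewrite inB' => /orP[vB|vE].
  +
    have vE : v \notin E by apply: contraTN vB => /EB.
    have BvB' : B :\ v \subset B' :\ v by apply: setSD.
    set g := if v == x then b else x.
    have gB : g \in B :\ v.
      rewrite /g; case: (eqVneq v x) => [vx|vx]; rewrite in_setD1 ?bB ?xB andbT //.
      by rewrite vx eq_sym.
      by rewrite eq_sym.
    apply: (hub_conn (h := g)) => z; rewrite in_setD1 inB' => /andP[zv /orP[zB|zE]].
      apply: connect_mono BvB' (BV _ vB _ _ _ gB); by rewrite in_setD1 zv.
    have [E1 [E2 dE]] := splitE z zE.
    have EBv : forall w, w \in E -> w \in B' :\ v.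
      by move=> w wE; rewrite in_setD1 (EB' _ wE) andbT; apply: contraNneq vE => <-.
    rewrite /g; case: (eqVneq v x) => [vx|vx].
    * apply: (ear_suf (Pz _ _ _ dE)); first exact: EBv.
        by move=> w wE; apply: EBv; rewrite dE mem_cat inE wE !orbT.
      by rewrite in_setD1 inB' bB andbT vx eq_sym.
    * rewrite csym; apply: (ear_pre (Pz _ _ _ dE)); last exact: EBv.
        by rewrite in_setD1 inB' xB andbT eq_sym.
      by move=> w wE; apply: EBv; rewrite dE mem_cat wE.
  +
    have vB : v \notin B by exact: EB.
    have BBv : B \subset B' :\ v.
      by apply/subsetP => w wB; rewrite in_setD1 inB' wB andbT; apply: contraNneq vB => <-.
    have [E1 [E2 dE]] := splitE v vE.
    have U' : uniq (E1 ++ v :: E2).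
      rewrite -dE; move: U =>  /= /andP[_]; rewrite cat_uniq => /and3P[] //.
    have [vE1 vE2] : v \notin E1 /\ v \notin E2.
      by move: U'; rewrite cat_uniq /= negb_or => /and3P[_ /andP[h _] /andP[h2 _]]; split.
    have sub : forall w, w \in E -> w != v -> w \in B' :\ v.
      by move=> w wE wv; rewrite in_setD1 wv (EB' _ wE).
    apply: (hub_conn (h := x)) => z; rewrite in_setD1 inB' => /andP[zv /orP[zB|zE]].
      exact: connect_mono BBv (BC _ _ zB xB).
    move: zE; rewrite dE mem_cat inE (negbTE zv) /= => /orP[zE1|zE2].
    * have [E11 [E12 dE1]] : exists E11 E12, E1 = E11 ++ z :: E12.
        by case/splitPr: zE1 => E11 E12; exists E11, E12.
      rewrite csym; apply: (ear_pre (E2 := E12 ++ v :: E2) (Pz _ _ _ _)).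
      - by rewrite dE dE1 -catA.
      - by rewrite in_setD1 inB' xB andbT; apply: contraNneq vB => <-.
      - move=> w wE; apply: sub; first by rewrite dE dE1 !mem_cat wE.
        by apply: contraNneq vE1 => <-; rewrite dE1 mem_cat wE.
      - by rewrite in_setD1 zv; apply: EB'; rewrite dE mem_cat zE1.
    * have [E21 [E22 dE2]] : exists E21 E22, E2 = E21 ++ z :: E22.
        by case/splitPr: zE2 => E21 E22; exists E21, E22.
      apply: connect_trans (connect_mono BBv (BC _ _ bB xB)).
      apply: (ear_suf (E1 := E1 ++ v :: E21) (Pz _ _ _ _)).
      - by rewrite dE dE2 -catA.
      - by rewrite in_setD1 zv; apply: EB'; rewrite dE dE2 !(mem_cat, inE) eqxx !orbT.
      - move=> w wE; apply: sub; first by rewrite dE dE2 !(mem_cat, inE) wE !orbT.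
        by apply: contraNneq vE2 => <-; rewrite dE2 !(mem_cat, inE) wE !orbT.
      - by rewrite in_setD1 inB' bB andbT; apply: contraNneq vB => <-.
Qed.

Lemma first_in (B : {set T}) q y : y \notin B -> last y q \in B ->
  exists q1 b q2, [/\ q = rcons q1 b ++ q2, b \in B & {in q1, forall z, z \notin B}].
Proof.
elim: q y => [|z q IH] y /=; first by move=> /negbTE ->.
move=> yB lB; case: (boolP (z \in B)) => zB.
  by exists [::], z, q; split.
have [q1 [b [q2 [-> bB nq1]]]] := IH z zB lB.
exists (z :: q1), b, q2; split => //.
by move=> w; rewrite inE => /orP[/eqP->|/nq1].
Qed.

Lemma path_restr_sub (X : {set T}) a s : path (restr e X) a s -> {subset s <= X}.
Proof.
elim: s a => [|z s IH] a //= /andP[/and3P[_ zX _] P] w.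
by rewrite inE => /orP[/eqP->|/(IH _ P)].
Qed.

Lemma nbr_in_block (B : {set T}) x c y : block e B -> x \in B -> c \in B -> c != x ->
  connected_on e [set~ x] -> e x y -> y \in B.
Proof.
case=> nsB maxB xB cB cx Cx xy; apply/negPn/negP => yB.
have yx : y \in [set~ x] by rewrite !inE; apply/eqP => yx; subst y; rewrite eirr in xy.
have cx' : c \in [set~ x] by rewrite !inE.
case/connectP: (Cx _ _ yx cx') => p P cl.
move: cl; case: (shortenP P) => p' P' U' _ cl.
have lB : last y p' \in B by rewrite -cl.
have [q1 [b [q2 [dp bB nq1]]]] := first_in yB lB.
have Pb : path (restr e [set~ x]) y (rcons q1 b) by move: P'; rewrite dp cat_path => /andP[].
have subx := path_restr_sub Pb.
have Ub : uniq (y :: rcons q1 b) by move: U'; rewrite dp -cat_cons cat_uniq => /andP[].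
have xnot : forall z, z \in rcons q1 b -> z != x.
  by move=> z /subx; rewrite !inE.
have bx : b != x by apply: xnot; rewrite mem_rcons inE eqxx.
have ns := ear_nonsep (E := y :: q1) nsB xB bB (x := x) (b := b).
have Pe : path e x ((y :: q1) ++ [:: b]).
  rewrite /= xy cats1; apply: sub_path Pb => p1 q /and3P[].
  by [].
have Ue : uniq (x :: (y :: q1) ++ [:: b]).
  rewrite cat_cons cats1; apply/andP; split; last exact: Ub.
  rewrite inE negb_or; apply/andP; split.
    by move: yx; rewrite !inE eq_sym.
  by apply/negP => /xnot; rewrite eqxx.
have EB : forall z, z \in y :: q1 -> z \notin B.
  by move=> z; rewrite inE => /orP[/eqP->//|/nq1].
have xb : x != b by rewrite eq_sym.
have := maxB _ (subsetUl _ _) (ns xb Pe Ue EB).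
move/setP/(_ y); rewrite !inE eqxx orbT => yB'.
by rewrite -yB' in yB.
Qed.

Lemma conn_small (X : {set T}) : (forall p q, p \in X -> q \in X -> p = q \/ e p q) ->
  connected_on e X.
Proof.
move=> H p q pX qX; case: (H p q pX qX) => [->|pq]; first exact: connect0.
by apply: connect1; rewrite /restr /= pX qX pq.
Qed.

Lemma c_has_nbr (B : {set T}) c : block e B -> c \in B -> 2 <= #|T| ->
  connected_graph e -> exists y, y \in B /\ e c y.
Proof.
case=> [[B0 [BC BV]] maxB] cB T2 CG.
case: (boolP [exists w, (w \in B) && (w != c)]) => [/existsP[w /andP[wB wc]]|none].
  have cw : c != w by rewrite eq_sym.
  have [y [_ yB cy]] := first_step (BC _ _ cB wB) cw.
  by exists y.
have Bc : forall w, w \in B -> w = c.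
  move=> w wB; apply/eqP; apply/negPn/negP => wc.
  by move/existsP: none; apply; exists w; rewrite wB.
have : 0 < #|[set~ c]| by rewrite cardsC1; lia.
case/card_gt0P => w; rewrite !inE => wc.
have cw : c != w by rewrite eq_sym.
have [y [_ _ cy]] := first_step (CG _ _ (in_setT c) (in_setT w)) cw.
have ns : nonseparable e [set c; y].
  split; [|split].
  - by apply/set0Pn; exists c; rewrite !inE eqxx.
  - apply: conn_small => p q; rewrite !inE => /orP[]/eqP-> /orP[]/eqP->; auto.
    by right; rewrite esy.
  - move=> v vcy; apply: conn_small => p q; rewrite !inE.
    move: vcy; rewrite !inE.
    by case/orP=> /eqP-> /andP[pv /orP[]/eqP pe] /andP[qv /orP[]/eqP qe];
      subst; rewrite ?eqxx in pv qv *; auto.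
have sub : B \subset [set c; y] by apply/subsetP => z /Bc ->; rewrite !inE eqxx.
have := maxB _ sub ns; move/setP/(_ y); rewrite !inE eqxx orbT => /esym /Bc yc.
by rewrite yc eirr in cy.
Qed.

Lemma notc (r1 : seq T) a X c z : uniq (r1 ++ a :: X) -> head c (r1 ++ a :: X) = c ->
  z \in X -> z != c.
Proof.
move=> U H zX; apply/eqP => zc; subst z.
have cr : c \in rcons r1 a.
  case: r1 U H => [|y r1] /= _ ->; first by rewrite inE eqxx.
  by rewrite inE eqxx.
move: U; rewrite -cat_rcons cat_uniq => /and3P[_ /hasP[]]; by exists c.
Qed.

Lemma end_nbrs (B : {set T}) c s t u : maxp B c s -> s = rcons t u ->
  (forall y, e u y -> y \in B) -> forall y, e u y -> y \in t.
Proof.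
move=> Ms st NB y uy.
have sn : s != [::] by rewrite st; case: t {st}.
have := maxp_ext Ms sn (NB _ uy); rewrite st last_rcons => /(_ uy).
rewrite mem_rcons inE => /orP[/eqP yu|//].
by move: uy; rewrite yu eirr.
Qed.

Lemma last_edge r w u : sorted e (rcons (rcons r w) u) -> e w u.
Proof. by rewrite -!cats1 -catA /= sorted_catE => /andP[_] /= /andP[]. Qed.

Lemma uniq_parts (r1 : seq T) a X : uniq (r1 ++ a :: X) -> a \notin X /\ uniq X.
Proof. by rewrite cat_uniq => /and3P[_ _ /andP[]]. Qed.

Lemma leaf_triangle (B : {set T}) : ~ has_chorded_cycle e -> 4 <= #|T| -> delta2_ge e 4 ->
  connected_graph e -> leaf_block e B -> triangle e B.
Proof.
move=> NC T4 D2 CG [[nsB maxB] [c [cB cutc uc]]].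
have blk : block e B by split.
have F1 : forall z y, z \in B -> z != c -> e z y -> y \in B.
  move=> z y zB zc zy; apply: (nbr_in_block blk zB cB _ _ zy); first by rewrite eq_sym.
  by apply: NNPP => h; move: (uc z zB h) => /eqP; rewrite (negbTE zc).
have [y0 [y0B cy0]] : exists y, y \in B /\ e c y.
  by apply: (c_has_nbr blk cB) => //; lia.
have [s Ms] := maxp_exists cB.
have [s' ds] := maxp_nil Ms cB.
have Ms0 := Ms; case: Ms0 => [[So U Sub H] Mx].
have s'n : s' != [::].
  apply/eqP => s'0; subst s'.
  have : okp B c [:: c; y0].
    split => //=; first by rewrite cy0.
      by rewrite inE andbT; apply/eqP => yc; subst y0; rewrite eirr in cy0.
    by move=> z; rewrite !inE => /orP[]/eqP->.
  by move/Mx; rewrite ds.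
set u := last c s'.
set t := belast c s'.
have st : s = rcons t u by rewrite ds /u /t -lastI.
have ct : c \in t by rewrite /t; case: (s') s'n => // z q _ /=; rewrite inE eqxx.
have Us := U; rewrite st rcons_uniq in Us; case/andP: Us => ut _.
have uc' : u != c by apply: contraNneq ut => ->.
have uB : u \in B by apply: Sub; rewrite st mem_rcons inE eqxx.
have Nu : forall y, e u y -> y \in t := end_nbrs Ms st (fun y => F1 u y uB uc').
move: ct ut Nu st; case/lastP: t => [//|r w] ct ut Nu st.
have wu : e w u by apply: (last_edge (r := r)); rewrite -st.
have uw : u != w by apply: contraNneq ut => ->; rewrite mem_rcons inE eqxx.
case: (classic (exists a, e u a /\ a != w)) => [[a [ua aw]]|nA]; last first.
  exfalso; apply: NC; apply: (deg1 uw _ T4 D2) => y uy.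
  by apply: NNPP => yw; apply: nA; exists y; split => //; apply/eqP.
have ar : a \in r by move: (Nu _ ua); rewrite mem_rcons inE (negbTE aw).
have Nu2 : forall y, e u y -> y = a \/ y = w.
  move=> y uy; apply: NNPP => hy.
  have ya : y != a by apply/eqP => ya; apply: hy; left.
  have yw : y != w by apply/eqP => yw; apply: hy; right.
  apply: NC; rewrite st in So U.
  apply: (no3 So U (y1 := a) (y2 := w) (y3 := y)) => //.
  - by rewrite mem_rcons inE ar orbT.
  - by rewrite mem_rcons inE eqxx.
  - exact: Nu.
  - by rewrite eq_sym.
  - by rewrite eq_sym.
  - by rewrite esy.
case/splitPr: ar ct ut Nu st => r1 r2 ct ut Nu st.
set X := r2 ++ [:: w; u].
have sX : s = r1 ++ a :: X by rewrite st /X -!cats1 -!catA.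
have okX : okp B c (r1 ++ a :: X) by rewrite -sX; split.
have [aX uX] : a \notin X /\ uniq X by apply: (uniq_parts (r1 := r1)); rewrite -sX.
have okR : okp B c (r1 ++ a :: rev X).
  by apply: (rot_ok okX); rewrite /X last_cat /= esy.
have MR : maxp B c (r1 ++ a :: rev X) by split => // t' /Mx; rewrite rot_size -sX.
have aB : a \in B by apply: Sub; rewrite sX mem_cat inE eqxx orbT.
have wB : w \in B by apply: Sub; rewrite sX mem_cat inE /X mem_cat !inE eqxx !orbT.
have HX : head c (r1 ++ a :: X) = c by rewrite -sX.
have UX : uniq (r1 ++ a :: X) by rewrite -sX.
have wc : w != c by apply: (notc UX HX); rewrite /X mem_cat !inE eqxx !orbT.
have dX : X = r2 ++ [:: w; u] by [].
clearbody X.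
case: r2 ct ut Nu st dX => [|b r2'] ct ut Nu st dX.
-
  rewrite /= in dX; subst X.
  have st2 : r1 ++ a :: rev [:: w; u] = rcons (r1 ++ [:: a; u]) w by rewrite -cats1 -catA.
  have Nw : forall y, e w y -> y \in r1 ++ [:: a; u] := end_nbrs MR st2 (fun y => F1 w y wB wc).
  have awe : e a w by move: So; rewrite sX sorted_catE => /andP[_] /= /andP[].
  have au : a != u by apply: contraNneq aX => ->; rewrite !inE eqxx orbT.
  have Nw2 : forall y, e w y -> y = a \/ y = u.
    move=> y wy; apply: NNPP => hy.
    have ya : y != a by apply/eqP => ya; apply: hy; left.
    have yu : y != u by apply/eqP => yu; apply: hy; right.
    case: okR => So2 U2 _ _; rewrite st2 in So2 U2.
    apply: NC; apply: (no3 So2 U2 (y1 := a) (y2 := u) (y3 := y)) => //.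
    - by rewrite mem_cat !inE eqxx !orbT.
    - by rewrite mem_cat !inE eqxx !orbT.
    - exact: Nw.
    - by rewrite eq_sym.
    - by rewrite eq_sym.
    - by rewrite esy.
  case: nsB => _ [_ BV].
  have hB : B =i [:: a; w; u].
    move=> z; apply/idP/idP => [zB|]; last by rewrite !inE => /or3P[]/eqP->.
    apply/negPn/negP => zn.
    have ua' : u != a by rewrite eq_sym.
    have za : z != a by apply: contraNneq zn => ->; rewrite inE eqxx.
    have uBa : u \in B :\ a by rewrite in_setD1 ua' uB.
    have zBa : z \in B :\ a by rewrite in_setD1 za zB.
    pose Y := [pred q | (q == u) || (q == w)].
    have uY : u \in Y by rewrite inE eqxx.
    have step : forall p q, p \in Y -> restr e (B :\ a) p q -> q \in Y.
      move=> p q; rewrite !inE => /orP[]/eqP-> /and3P[_]; rewrite in_setD1 => /andP[qa _] pq.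
      + by case: (Nu2 _ pq) => qe; [move: qa; rewrite qe eqxx | rewrite qe eqxx orbT].
      + by case: (Nw2 _ pq) => qe; [move: qa; rewrite qe eqxx | rewrite qe eqxx].
    have := closure_conn (BV _ aB _ _ uBa zBa) uY step.
    rewrite inE => /orP[]/eqP zE; move: zn; rewrite zE !inE eqxx ?orbT //.
  split.
    rewrite (eq_card hB); apply/card_uniqP.
    have wu' : w != u by rewrite eq_sym.
    by rewrite /= !inE negb_or aw au wu'.
  move=> p q; rewrite !hB !inE => /or3P[]/eqP-> /or3P[]/eqP->; rewrite ?eqxx // => _;
    first [done | by rewrite esy].
- set Y := r2' ++ [:: w; u].
  have dY : X = b :: Y by rewrite dX.
  clear dX.
  set t2 := r1 ++ a :: rev Y.
  have st2 : r1 ++ a :: rev X = rcons t2 b by rewrite dY rev_cons /t2 rcons_cat rcons_cons.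
  have bX : b \in X by rewrite dY inE eqxx.
  have bc : b != c := notc UX HX bX.
  have bB : b \in B by apply: Sub; rewrite sX mem_cat inE bX !orbT.
  have Nb : forall y, e b y -> y \in t2 := end_nbrs MR st2 (fun y => F1 b y bB bc).
  have PaX : path e a (b :: Y) by move: So; rewrite sX dY sorted_catE => /andP[].
  have ab : e a b by case/andP: PaX.
  set b' := head w Y.
  have bb' : e b b' by move: PaX; rewrite /b' /Y /=; case: (r2') => [|z q] /= /and3P[].
  have b'Y : b' \in Y by rewrite /b' /Y; case: (r2') => [|z q] /=; rewrite inE eqxx.
  have ab' : a != b' by apply: contraNneq aX => ->; rewrite dY inE b'Y orbT.
  have [bY _] : b \notin Y /\ uniq Y by move: uX; rewrite dY => /andP[].
  have Nb2 : forall y, e b y -> y = a \/ y = b'.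
    move=> y by_; apply: NNPP => hy.
    have ya : y != a by apply/eqP => ya; apply: hy; left.
    have yb : y != b' by apply/eqP => yb; apply: hy; right.
    case: okR => So2 U2 _ _; rewrite st2 in So2 U2.
    apply: NC; apply: (no3 So2 U2 (y1 := a) (y2 := b') (y3 := y)) => //.
    - by rewrite /t2 mem_cat inE eqxx orbT.
    - by rewrite /t2 mem_cat inE mem_rev b'Y !orbT.
    - exact: Nb.
    - by rewrite eq_sym.
    - by rewrite eq_sym.
    - by rewrite esy.
  have ub : u != b by apply: contraNneq bY => <-; rewrite /Y mem_cat !inE eqxx !orbT.
  have nub : ~~ e u b.
    apply/negP => /Nu2 [ba|bw].
      by move: aX; rewrite -ba bX.
    by move: bY; rewrite /Y -bw mem_cat !inE eqxx !orbT.
  have := D2 _ _ ub nub.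
  have sub : nbhd e u :|: nbhd e b \subset [set z | z \in [:: a; w; b']].
    apply/subsetP => z; rewrite !inE => /orP[/Nu2|/Nb2] [] ->; rewrite eqxx ?orbT //.
  move=> h4; exfalso.
  have c3 : #|[:: a; w; b']| <= 3 := card_size _.
  have h2 := subset_leq_card sub.
  have h3 : #|[set z | z \in [:: a; w; b']]| = #|[:: a; w; b']| := cardsE _.
  rewrite h3 in h2.
  by have := leq_trans h4 (leq_trans h2 c3).
Qed.
End G.

Theorem lemma2p9 (T : finType) (e : rel T) :
  symmetric e -> irreflexive e ->
  connected_graph e -> 4 <= #|T| -> delta2_ge e 4 ->
  has_chorded_cycle e \/ (forall B : {set T}, leaf_block e B -> triangle e B).
Proof.
move=> esy eirr CG T4 D2.
case: (classic (has_chorded_cycle e)) => [h|NC]; [by left | right].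
by move=> B lB; apply: (leaf_triangle esy eirr).
Qed.
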